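(* Let $k<-2$ be fixed and $p\neq 0$ real. The inequality $$\frac{2}{k+2}\left( \frac{\sinh x}{x}\right) ^{kp}+\frac{k}{k+2}\left( \frac{\tanh x}{x}\right) ^{p}<1$$ holds for all $x\in (0,\infty)$ if and only if $p<0$ or $p\geq -\dfrac{12}{5(k+2)}$. *)

(* Defs.v *)
From Stdlib Require Import Reals.
Open Scope R_scope.

(* Main.v *)
Require Import Defs.
From Stdlib Require Import Reals Lra Lia Psatz ZArith List.
From Coquelicot Require Import Coquelicot.
Open Scope R_scope.

Lemma series_R (a : nat -> R) l : is_series a l <-> is_lim_seq (sum_n a) l.
Proof. split; intro H; exact H. Qed.

Lemma exp_series (y : R) : is_series (fun n => y ^ n / INR (fact n)) (exp y).
Proof.
  generalize (is_exp_Reals y); unfold is_pseries; apply is_series_ext.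
  intro n. rewrite pow_n_pow. unfold scal; simpl. unfold mult; simpl. unfold Rdiv. ring.
Qed.

Lemma sub_lim (b : nat -> R) l (phi : nat -> nat) : is_lim_seq (sum_n b) l ->
  (forall n, (n <= phi n)%nat) ->
  is_lim_seq (fun M => sum_n b (phi M)) l.
Proof.
  intros H Hp. apply (is_lim_seq_subseq (sum_n b) l phi); auto.
  intros P [N HN]. exists N. intros n Hn. apply HN. specialize (Hp n). lia.
Qed.

Lemma even_sub (b : nat -> R) l : is_series b l -> (forall m, b (S (2*m)) = 0) ->
  is_series (fun m => b (2*m)%nat) l.
Proof.
  intros H H0. apply series_R. apply series_R in H.
  assert (E : forall M, sum_n (fun m => b (2*m)%nat) M = sum_n b (2*M)).
  { induction M. simpl. rewrite !sum_O. reflexivity.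
    rewrite sum_Sn, IHM. replace (2 * S M)%nat with (S (S (2*M))) by lia.
    rewrite (sum_Sn b (S (2*M))), (sum_Sn b (2*M)). rewrite H0. unfold plus; simpl.
    replace (S (M + S (M + 0)))%nat with (S (S (2*M)))%nat by lia. ring. }
  eapply is_lim_seq_ext. intro M; symmetry; apply E.
  apply (sub_lim b l (fun M => 2*M)%nat); auto. intro; lia.
Qed.

Lemma odd_sub (b : nat -> R) l : is_series b l -> (forall m, b (2*m)%nat = 0) ->
  is_series (fun m => b (S (2*m))) l.
Proof.
  intros H H0. apply series_R. apply series_R in H.
  assert (E : forall M, sum_n (fun m => b (S (2*m))) M = sum_n b (S (2*M))).
  { induction M. simpl. rewrite sum_O, sum_Sn, sum_O. generalize (H0 0%nat); simpl; intro Z0; rewrite Z0. unfold plus; simpl. ring.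
    rewrite sum_Sn, IHM. replace (S (2 * S M))%nat with (S (S (S (2*M)))) by lia.
    rewrite (sum_Sn b (S (S (2*M)))), (sum_Sn b (S (2*M))).
    replace (S (S (2*M))) with (2 * S M)%nat by lia. rewrite H0. unfold plus; simpl.
    replace (S (M + S (M + 0)))%nat with (S (S (2*M)))%nat by lia. ring. }
  eapply is_lim_seq_ext. intro M; symmetry; apply E.
  apply (sub_lim b l (fun M => S (2*M))%nat); auto. intro; lia.
Qed.

Lemma is_series_eq_l (a : nat -> R) (l l' : R) : is_series a l -> l = l' -> is_series a l'.
Proof. intros; subst; auto. Qed.

Lemma cosh_series (y : R) : is_series (fun m => y ^ (2*m) / INR (fact (2*m))) (cosh y).
Proof.
  assert (H := is_series_scal (/2) _ _ (is_series_plus _ _ _ _ (exp_series y) (exp_series (-y)))).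
  assert (Ec : scal (/2) (plus (exp y) (exp (-y))) = cosh y).
  { unfold cosh. unfold scal, plus; simpl. unfold mult; simpl. field. }
  apply (is_series_eq_l _ _ _ H) in Ec. clear H; rename Ec into H. apply even_sub in H.
  - eapply is_series_ext; [|exact H]. intro m.
    assert (Hm : (-y)^(2*m) = y^(2*m)) by (rewrite !pow_mult; f_equal; ring).
    cbv beta; rewrite Hm. assert (HF := INR_fact_neq_0 (2*m)). set (F := INR (fact (2*m))) in *.
    unfold scal, plus; simpl. unfold mult; simpl. field. exact HF.
  - intro m.
    assert (Hm : (-y)^(S (2*m)) = - y^(S (2*m))).
    { rewrite <- (Rmult_1_l y) at 1. rewrite Ropp_mult_distr_l, Rpow_mult_distr.
      rewrite pow_1_odd. ring. }
    cbv beta; rewrite Hm. unfold scal, plus; simpl. unfold mult; simpl. unfold Rdiv; rewrite <- Ropp_mult_distr_l; lra.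
Qed.

Lemma sinh_series (y : R) : is_series (fun m => y ^ (S (2*m)) / INR (fact (S (2*m)))) (sinh y).
Proof.
  assert (H := is_series_scal (/2) _ _ (is_series_minus _ _ _ _ (exp_series y) (exp_series (-y)))).
  assert (Ec : scal (/2) (plus (exp y) (opp (exp (-y)))) = sinh y).
  { unfold sinh. unfold scal, plus, opp; simpl. unfold mult; simpl. field. }
  apply (is_series_eq_l _ _ _ H) in Ec. clear H; rename Ec into H. apply odd_sub in H.
  - eapply is_series_ext; [|exact H]. intro m.
    assert (Hm : (-y)^(S (2*m)) = - y^(S (2*m))).
    { rewrite <- (Rmult_1_l y) at 1. rewrite Ropp_mult_distr_l, Rpow_mult_distr.
      rewrite pow_1_odd. ring. }
    cbv beta; rewrite Hm. assert (HF := INR_fact_neq_0 (S (2*m))). set (F := INR (fact (S (2*m)))) in *.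
    unfold scal, plus, opp; simpl. unfold mult; simpl. field. exact HF.
  - intro m.
    assert (Hm : (-y)^(2*m) = y^(2*m)) by (rewrite !pow_mult; f_equal; ring).
    cbv beta; rewrite Hm. unfold scal, plus, opp; simpl. unfold mult; simpl. ring.
Qed.

Lemma shift_series (b : nat -> R) (l : R) a : is_series b l ->
  is_series (fun M => if (a <=? M)%nat then b (M - a)%nat else 0) l.
Proof.
  intro H. induction a.
  - eapply is_series_ext; [|exact H]. intro n. simpl. f_equal. lia.
  - apply is_series_decr_1. simpl.
    apply (is_series_eq_l _ l); [exact IHa | unfold plus, opp; simpl; lra].
Qed.

Definition tf (k : nat) (j : Z) (x : R) : R :=
  x ^ k * (if Nat.even k then cosh (IZR j * x) else sinh (IZR j * x)).
Definition tc (k : nat) (j : Z) (M : nat) : R :=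
  if (k <=? 2*M)%nat then IZR j ^ (2*M - k) / INR (fact (2*M - k)) else 0.

Lemma tf_series k j x : is_series (fun M => tc k j M * x ^ (2*M)) (tf k j x).
Proof.
  unfold tf. destruct (Nat.even k) eqn:E.
  - apply Nat.even_spec in E. destruct E as [a Ha]. subst k.
    assert (H := shift_series _ _ a (is_series_scal (x ^ (2*a)) _ _ (cosh_series (IZR j * x)))).
    eapply is_series_ext; [|exact H]. intro M. unfold tc. change (scal ?u ?v) with (Rmult u v). match goal with |- ?A = ?B => change (@eq R A B) end.
    destruct (Nat.leb_spec a M); destruct (Nat.leb_spec (2*a) (2*M)); try lia.
    + replace (2*M - 2*a)%nat with (2*(M-a))%nat by lia.
      rewrite Rpow_mult_distr.
      replace (2*M)%nat with (2*a + 2*(M-a))%nat by lia. rewrite pow_add. field.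
      apply not_0_INR, fact_neq_0.
    + ring.
  - assert (E' : Nat.odd k = true) by (rewrite <- Nat.negb_even, E; reflexivity).
    apply Nat.odd_spec in E'. destruct E' as [a Ha]. subst k.
    assert (H := shift_series _ _ (S a) (is_series_scal (x ^ (2*a+1)) _ _ (sinh_series (IZR j * x)))).
    eapply is_series_ext; [|exact H]. intro M. unfold tc. change (scal ?u ?v) with (Rmult u v). match goal with |- ?A = ?B => change (@eq R A B) end.
    destruct (Nat.leb_spec (S a) M); destruct (Nat.leb_spec (2*a+1) (2*M)); try lia.
    + replace (2*M - (2*a+1))%nat with (S (2*(M - S a))) by lia.
      rewrite Rpow_mult_distr.
      replace (2*M)%nat with (2*a+1 + S (2*(M - S a)))%nat by lia. rewrite (pow_add x (2*a+1)). field.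
      apply not_0_INR, fact_neq_0.
    + ring.
Qed.

Ltac Req := match goal with |- ?A = ?B => change (@eq R A B) end.

Definition term := (Z * nat * Z)%type.
Fixpoint ev (l : list term) (x : R) : R :=
  match l with nil => 0 | (c, k, j) :: r => IZR c * tf k j x + ev r x end.
Fixpoint co (l : list term) (M : nat) : R :=
  match l with nil => 0 | (c, k, j) :: r => IZR c * tc k j M + co r M end.

Lemma ev_series l x : is_series (fun M => co l M * x ^ (2*M)) (ev l x).
Proof.
  induction l as [|[[c k] j] r IH]; simpl.
  - apply series_R. eapply is_lim_seq_ext; [|apply is_lim_seq_const].
    intro n. rewrite (sum_n_ext _ (fun _ => 0)) by (intro; Req; ring). rewrite sum_n_const. Req; ring.
  - assert (H := is_series_plus _ _ _ _ (is_series_scal (IZR c) _ _ (tf_series k j x)) IH).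
    eapply is_series_ext; [|exact H]. intro M. unfold scal, plus; simpl. unfold mult; simpl. Req; ring.
Qed.

Lemma pow2M_nonneg x M : 0 <= x ^ (2*M).
Proof. rewrite pow_mult. apply pow_le. nra. Qed.

Lemma ev_nonneg l x : (forall M, 0 <= co l M) -> 0 <= ev l x.
Proof.
  intro H. assert (Hs := ev_series l x). apply series_R in Hs.
  assert (Hn := is_lim_seq_incr_compare _ _ Hs).
  assert (0 <= sum_n (fun M => co l M * x ^ (2*M)) 0).
  { rewrite sum_O. apply Rmult_le_pos; auto. apply pow2M_nonneg. }
  eapply Rle_trans; [exact H0|]. apply Hn. intro n. rewrite sum_Sn. change (plus ?a ?b) with (Rplus a b).
  assert (0 <= co l (S n) * x ^ (2 * S n)) by (apply Rmult_le_pos; auto; apply pow2M_nonneg). lra.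
Qed.

Lemma sum_n_ge_term (a : nat -> R) n : (forall m, 0 <= a m) -> a n <= sum_n a n.
Proof.
  intro H. destruct n. rewrite sum_O; lra.
  rewrite sum_Sn. change (plus ?a ?b) with (Rplus a b).
  assert (0 <= sum_n a n). { induction n. rewrite sum_O; auto. rewrite sum_Sn. change (plus ?a ?b) with (Rplus a b).
    specialize (H (S n)). lra. }
  lra.
Qed.

Lemma ev_pos l x M0 : (forall M, 0 <= co l M) -> 0 < co l M0 -> x <> 0 -> 0 < ev l x.
Proof.
  intros H H0 Hx. assert (Hs := ev_series l x). apply series_R in Hs.
  assert (Hn := is_lim_seq_incr_compare _ _ Hs).
  assert (Hm : forall m, 0 <= co l m * x ^ (2*m)) by (intro; apply Rmult_le_pos; auto; apply pow2M_nonneg).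
  assert (0 < co l M0 * x ^ (2*M0)).
  { apply Rmult_lt_0_compat; auto. rewrite pow_mult. apply pow_lt. nra. }
  eapply Rlt_le_trans; [exact H1|]. eapply Rle_trans; [apply (sum_n_ge_term _ M0 Hm)|].
  apply Hn. intro n. rewrite sum_Sn. change (plus ?a ?b) with (Rplus a b). specialize (Hm (S n)). lra.
Qed.

Fixpoint zff (n k : nat) : Z :=
  match k with O => 1%Z | S k' => (zff n k' * (Z.of_nat n - Z.of_nat k'))%Z end.

Lemma zff_fact n k : (k <= n)%nat -> INR (fact n) = IZR (zff n k) * INR (fact (n - k)).
Proof.
  induction k; intro H.
  - simpl. replace (n - 0)%nat with n by lia. ring.
  - rewrite IHk by lia. simpl zff. rewrite mult_IZR.
    replace (n - k)%nat with (S (n - S k)) by lia. rewrite fact_simpl, mult_INR.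
    rewrite minus_IZR, <- !INR_IZR_INZ. rewrite S_INR, minus_INR by lia. rewrite S_INR. ring.
Qed.

Lemma zff_zero n k : (n < k)%nat -> zff n k = 0%Z.
Proof.
  induction k; intro H. lia. simpl. destruct (Nat.eq_dec n k).
  - subst. ring.
  - rewrite IHk by lia. ring.
Qed.

Fixpoint Zc (l : list term) (M : nat) : Z :=
  match l with nil => 0%Z
  | (c, k, j) :: r => (c * zff (2*M) k * j ^ Z.of_nat (2*M - k) + Zc r M)%Z end.

Lemma co_Zc l M : co l M * INR (fact (2*M)) = IZR (Zc l M).
Proof.
  induction l as [|[[c k] j] r IH]; cbn [co Zc].
  - simpl. ring.
  - rewrite plus_IZR, <- IH, !mult_IZR, <- pow_IZR. unfold tc.
    destruct (Nat.leb_spec k (2*M)).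
    + rewrite (zff_fact (2*M) k) by auto. field. apply INR_fact_neq_0.
    + rewrite zff_zero by lia. simpl. ring.
Qed.

Lemma co_nonneg l : (forall M, (0 <= Zc l M)%Z) -> forall M, 0 <= co l M.
Proof.
  intros H M. assert (Hf := INR_fact_lt_0 (2*M)).
  assert (0 <= co l M * INR (fact (2*M))) by (rewrite co_Zc; apply IZR_le; auto).
  nra.
Qed.

Lemma co_pos l M : (0 < Zc l M)%Z -> 0 < co l M.
Proof.
  intros H. assert (Hf := INR_fact_lt_0 (2*M)).
  assert (0 < co l M * INR (fact (2*M))) by (rewrite co_Zc; apply IZR_lt; auto).
  nra.
Qed.

Lemma exp_pos_mult (p : positive) x : exp (IZR (Zpos p) * x) = exp x ^ Pos.to_nat p.
Proof.
  rewrite <- positive_nat_Z, <- INR_IZR_INZ. induction (Pos.to_nat p).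
  - simpl. rewrite Rmult_0_l, exp_0. ring.
  - rewrite S_INR, Rmult_plus_distr_r, exp_plus, IHn. simpl. rewrite Rmult_1_l. ring.
Qed.

Lemma cosh_pos_mult (p : positive) x :
  cosh (IZR (Zpos p) * x) = (exp x ^ Pos.to_nat p + / exp x ^ Pos.to_nat p) / 2.
Proof. unfold cosh. rewrite <- exp_pos_mult, <- exp_Ropp. f_equal. Qed.
Lemma sinh_pos_mult (p : positive) x :
  sinh (IZR (Zpos p) * x) = (exp x ^ Pos.to_nat p - / exp x ^ Pos.to_nat p) / 2.
Proof. unfold sinh. rewrite <- exp_pos_mult, <- exp_Ropp. f_equal. Qed.
Lemma cosh_0_mult x : cosh (IZR 0 * x) = 1.
Proof. rewrite Rmult_0_l. unfold cosh. rewrite Ropp_0, exp_0. field. Qed.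
Lemma sinh_0_mult x : sinh (IZR 0 * x) = 0.
Proof. rewrite Rmult_0_l. unfold sinh. rewrite Ropp_0, exp_0. field. Qed.

Definition T (c : Z) (k : nat) (j : Z) : term := (c, k, j).
Ltac ev_expand :=
  unfold T, ev, tf; cbn [Nat.even];
  rewrite ?cosh_pos_mult, ?sinh_pos_mult, ?cosh_0_mult, ?sinh_0_mult;
  unfold cosh, sinh; rewrite ?exp_Ropp; repeat match goal with |- context [Pos.to_nat ?p] => let v := eval compute in (Pos.to_nat p) in change (Pos.to_nat p) with v end;
  field; apply Rgt_not_eq, exp_pos.


Open Scope Z_scope.
Lemma zsplit j N k K : 0 <= 2*N - K -> 0 <= K - k -> j ^ (2*N - k) = j ^ (2*N - K) * j ^ (K - k).
Proof. intros. rewrite <- Z.pow_add_r by lia. f_equal. ring. Qed.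

Ltac zsplitK N K := repeat match goal with |- context [?j ^ (2 * N - ?k)] =>
   let b := eval compute in (Z.eqb k K) in match b with false => rewrite (zsplit j N k K) by lia end end.

Ltac Zc_prep M K :=
  cbn [Zc zff]; rewrite !Nat2Z.inj_sub by lia; rewrite !Nat2Z.inj_mul;
  let N := fresh "N" in set (N := Z.of_nat M);
  simpl Z.of_nat; rewrite ?Z.pow_1_l by lia; rewrite ?Z.pow_0_l by lia; zsplitK N K;
  repeat match goal with |- context [Z.pow ?j (?a - ?b)] => match a with (2*_)%Z => fail 1 | _ =>
     let v := eval compute in (Z.pow j (a - b)) in change (Z.pow j (a-b)) with v end end.

Lemma dom53_step e : 8 <= e -> 5 * (e+4)^4 >= 3 * (e+5)^4.
Proof.
  intro. set (d := e - 8). replace e with (d + 8) by (subst d; ring).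
  assert (0 <= d) by (subst d; lia).
  assert (0 <= d^2) by nia. assert (0 <= d^3) by nia. assert (0 <= d^4) by nia.
  ring_simplify. lia.
Qed.

Lemma dom53 (t : nat) : 5 ^ (28 + Z.of_nat t) >= (32 + Z.of_nat t)^4 * 3 ^ (28 + Z.of_nat t).
Proof.
  induction t.
  - vm_compute. discriminate.
  - rewrite Nat2Z.inj_succ. replace (28 + Z.succ (Z.of_nat t)) with (Z.succ (28 + Z.of_nat t)) by ring.
    rewrite !Z.pow_succ_r by lia.
    assert (H3 : 0 <= 3 ^ (28 + Z.of_nat t)) by (apply Z.pow_nonneg; lia).
    assert (Hs := dom53_step (28 + Z.of_nat t) ltac:(lia)).
    replace (28 + Z.of_nat t + 4) with (32 + Z.of_nat t) in Hs by ring.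
    replace (28 + Z.of_nat t + 5) with (32 + Z.succ (Z.of_nat t)) in Hs by ring.
    set (A := 5 ^ (28 + Z.of_nat t)) in *. set (B := 3 ^ (28 + Z.of_nat t)) in *.
    set (u := (32 + Z.of_nat t) ^ 4) in *. set (v := (32 + Z.succ (Z.of_nat t)) ^ 4) in *.
    assert (5 * A >= 5 * u * B) by lia.
    assert (5 * u * B >= 3 * v * B) by (apply Z.le_ge; apply Z.mul_le_mono_nonneg_r; lia).
    lia.
Qed.


Lemma check_small l n : forallb (fun M => Z.leb 0 (Zc l M)) (seq 0 n) = true ->
  forall M, (M < n)%nat -> 0 <= Zc l M.
Proof.
  intros H M HM. rewrite forallb_forall in H. specialize (H M).
  apply Z.leb_le, H, in_seq. lia.
Qed.
Close Scope Z_scope.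


Ltac Zsmall l n := intros M HM; apply (check_small l n); [vm_compute; reflexivity | lia].

Definition l_P1 : list term := T 1 1 1 :: T (-1) 2 0 :: nil.
Lemma P1_Zc M : (0 <= Zc l_P1 M)%Z.
Proof.
  destruct (Nat.lt_ge_cases M 2). revert M H; Zsmall l_P1 2%nat.
  unfold l_P1, T. Zc_prep M 1%Z. nia.
Qed.
Lemma P1 x : 0 < x -> x < sinh x.
Proof.
  intro Hx. assert (H := ev_pos l_P1 x 2 (co_nonneg _ P1_Zc) (co_pos l_P1 2 ltac:(vm_compute; reflexivity)) ltac:(lra)).
  replace (ev l_P1 x) with (x * sinh x - x ^ 2) in H by (unfold l_P1; ev_expand). nra.
Qed.

Definition l_P2 : list term := T 1 2 1 :: T (-1) 1 1 :: nil.
Lemma P2_Zc M : (0 <= Zc l_P2 M)%Z.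
Proof.
  destruct (Nat.lt_ge_cases M 2). revert M H; Zsmall l_P2 2%nat.
  unfold l_P2, T. Zc_prep M 1%Z. nia.
Qed.
Lemma P2 x : 0 < x -> sinh x < x * cosh x.
Proof.
  intro Hx. assert (H := ev_pos l_P2 x 2 (co_nonneg _ P2_Zc) (co_pos l_P2 2 ltac:(vm_compute; reflexivity)) ltac:(lra)).
  replace (ev l_P2 x) with (x * (x * cosh x - sinh x)) in H by (unfold l_P2; ev_expand).
  apply Rmult_lt_reg_l with x; lra.
Qed.

Definition l_P3 : list term := T 1 1 2 :: T (-2) 2 0 :: nil.
Lemma P3_Zc M : (0 <= Zc l_P3 M)%Z.
Proof.
  destruct (Nat.lt_ge_cases M 2). revert M H; Zsmall l_P3 2%nat.
  unfold l_P3, T. Zc_prep M 1%Z.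
  assert (0 <= 2 ^ (2 * N - 1))%Z by (apply Z.pow_nonneg; lia). nia.
Qed.
Lemma P3 x : 0 < x -> x < sinh x * cosh x.
Proof.
  intro Hx. assert (H := ev_pos l_P3 x 2 (co_nonneg _ P3_Zc) (co_pos l_P3 2 ltac:(vm_compute; reflexivity)) ltac:(lra)).
  replace (ev l_P3 x) with (2 * x * (sinh x * cosh x - x)) in H by (unfold l_P3; ev_expand).
  assert (0 < sinh x * cosh x - x); [|lra].
  apply Rmult_lt_reg_l with (2*x); lra.
Qed.

Definition l_P4 : list term := T 1 1 3 :: T (-3) 1 1 :: T (-4) 4 1 :: nil.
Lemma dom31 (t : nat) : (3 ^ (9 + Z.of_nat t) >= 4 * (10 + Z.of_nat t)^3 + 3)%Z.
Proof.
  induction t.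
  - vm_compute. discriminate.
  - rewrite Nat2Z.inj_succ. replace (9 + Z.succ (Z.of_nat t))%Z with (Z.succ (9 + Z.of_nat t)) by ring.
    rewrite Z.pow_succ_r by lia.
    replace (10 + Z.succ (Z.of_nat t))%Z with (11 + Z.of_nat t)%Z by lia.
    set (e := Z.of_nat t) in *. assert (0 <= e)%Z by (subst e; lia). clearbody e.
    set (A := (3 ^ (9 + e))%Z) in *. clearbody A.
    assert (P : (3 * (4 * (10 + e)^3 + 3) >= 4 * (11 + e)^3 + 3)%Z).
    { assert (0 <= e^2)%Z by nia. assert (0 <= e^3)%Z by nia. ring_simplify. lia. }
    lia.
Qed.
Lemma P4_Zc M : (0 <= Zc l_P4 M)%Z.
Proof.
  destruct (Nat.lt_ge_cases M 5). revert M H; Zsmall l_P4 5%nat.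
  unfold l_P4, T. Zc_prep M 1%Z.
  assert (Hd : (3 ^ (2*N-1) >= 4 * (2*N)^3 + 3)%Z).
  { assert (E : (2*N - 1 = 9 + Z.of_nat (Z.to_nat (2*N - 10)))%Z) by (rewrite Z2Nat.id; lia).
    rewrite E. replace (2*N)%Z with (10 + Z.of_nat (Z.to_nat (2*N - 10)))%Z at 2 by (rewrite Z2Nat.id; lia).
    apply dom31. }
  assert (HN : (5 <= N)%Z) by (subst N; lia).
  clearbody N. set (a := (3 ^ (2*N-1))%Z) in *. clearbody a.
  assert (HF4 : (0 <= (2*N)*(2*N-1)*(2*N-2)*(2*N-3) <= (2*N)^4)%Z) by nia.
  assert (h : ((2*N) * a >= (2*N) * (4 * (2 * N) ^ 3 + 3))%Z) by nia.
  lia.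
Qed.
Lemma P4 x : 0 < x -> x ^ 3 * cosh x <= sinh x ^ 3.
Proof.
  intro Hx. assert (H := ev_nonneg l_P4 x (co_nonneg _ P4_Zc)).
  replace (ev l_P4 x) with (4 * x * (sinh x ^ 3 - x ^ 3 * cosh x)) in H by (unfold l_P4; ev_expand).
  assert (0 <= sinh x ^ 3 - x ^ 3 * cosh x); [|lra].
  apply Rmult_le_reg_l with (4*x); lra.
Qed.

Definition l_P5 : list term :=
 T 5 0 5 :: T (-15) 0 3 :: T 10 0 1 :: T (-20) 1 3 :: T 60 1 1 :: T (-32) 4 2 :: T (-32) 4 0 ::
  T (-24) 3 3 :: T (-24) 3 1 :: T 32 3 2 :: T 24 2 3 :: T (-24) 2 1 :: nil.
Open Scope Z_scope.
Lemma Zc_P5_large M : (16 <= M)%nat -> 0 <= Zc l_P5 M.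
Proof.
  intro HM. unfold l_P5, T. Zc_prep M 4.
  assert (HN : 16 <= N) by (subst N; lia).
  assert (Hd : 5 ^ (2*N-4) >= (2*N)^4 * 3 ^ (2*N-4)).
  { assert (E : 2*N - 4 = 28 + Z.of_nat (Z.to_nat (2*N - 32))) by (rewrite Z2Nat.id; lia).
    rewrite E. replace (2*N) with (32 + Z.of_nat (Z.to_nat (2*N - 32))) at 2 by (rewrite Z2Nat.id; lia).
    apply dom53. }
  assert (H23 : 0 <= 2 ^ (2*N-4) <= 3 ^ (2*N-4)).
  { split. apply Z.pow_nonneg; lia. apply Z.pow_le_mono_l; lia. }
  assert (H3 : 1 <= 3 ^ (2*N-4)) by (assert (0 < 3 ^ (2*N-4)) by (apply Z.pow_pos_nonneg; lia); lia).
  set (a5 := 5 ^ (2*N-4)) in *. set (a3 := 3 ^ (2*N-4)) in *. set (a2 := 2 ^ (2*N-4)) in *.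
  clearbody a5 a3 a2 N.
  assert (HF4 : 0 <= (2*N)*(2*N-1)*(2*N-2)*(2*N-3) <= (2*N)^4) by nia.
  assert (HF3 : 0 <= (2*N)*(2*N-1)*(2*N-2) <= (2*N)^3) by nia.
  assert (HF2 : 0 <= (2*N)*(2*N-1) <= (2*N)^3) by nia.
  assert (h1 : 3125*a5 >= 3125*((2*N)^4*a3)) by lia.
  assert (h2 : (2*N)*(2*N-1)*(2*N-2)*(2*N-3)*a2 <= (2*N)^4 * a3).
  { apply Z.mul_le_mono_nonneg; lia. }
  assert (h3 : (2*N)*(2*N-1)*(2*N-2) * a3 <= (2*N)^3 * a3) by (apply Z.mul_le_mono_nonneg_r; lia).
  assert (h4 : 0 <= (2*N)*(2*N-1)*(2*N-2) * a2) by (apply Z.mul_nonneg_nonneg; lia).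
  assert (h4' : 0 <= (2*N)*(2*N-1) * a3) by (apply Z.mul_nonneg_nonneg; lia).
  assert (h5 : (2*N)^3 <= (2*N)^3 * a3) by nia.
  assert (h6 : 32 * (2*N)^3 * a3 <= (2*N)^4 * a3) by (apply Z.mul_le_mono_nonneg_r; nia).
  assert (h7 : 32 * (2*N) * a3 <= (2*N)^3 * a3) by (apply Z.mul_le_mono_nonneg_r; nia).
  assert (h8 : 32 * a3 <= (2*N) * a3) by nia.
  lia.
Qed.

Close Scope Z_scope.
Lemma P5_Zc M : (0 <= Zc l_P5 M)%Z.
Proof.
  destruct (Nat.lt_ge_cases M 16). revert M H; Zsmall l_P5 16%nat.
  apply Zc_P5_large; auto.
Qed.
Lemma P5 x : 0 < x -> 2 * x ^ 2 * cosh x * (x * cosh x - sinh x) * (2 * x + 3 * sinh x)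
   < 5 * sinh x ^ 3 * (sinh x * cosh x - x).
Proof.
  intro Hx. assert (H := ev_pos l_P5 x 5 (co_nonneg _ P5_Zc) (co_pos l_P5 5 ltac:(vm_compute; reflexivity)) ltac:(lra)).
  replace (ev l_P5 x) with (8 * (5 * sinh x ^ 3 * (2 * sinh x * cosh x - 2 * x)
   - 4 * x ^ 2 * cosh x * (x * cosh x - sinh x) * (2 * x + 3 * sinh x))) in H by (unfold l_P5; ev_expand).
  lra.
Qed.

Definition l_P6 : list term := T 120 1 1 :: T (-120) 2 0 :: T (-20) 4 0 :: T (-1) 6 0 :: nil.
Lemma P6_Zc M : (0 <= Zc l_P6 M)%Z.
Proof.
  destruct (Nat.lt_ge_cases M 4). revert M H; Zsmall l_P6 4%nat.
  unfold l_P6, T. Zc_prep M 1%Z. nia.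
Qed.
Lemma P6 x : 0 < x -> x + x^3/6 + x^5/120 <= sinh x.
Proof.
  intro Hx. assert (H := ev_nonneg l_P6 x (co_nonneg _ P6_Zc)).
  replace (ev l_P6 x) with (120 * x * (sinh x - (x + x^3/6 + x^5/120))) in H by (unfold l_P6; ev_expand).
  assert (0 <= sinh x - (x + x^3/6 + x^5/120)); [|lra].
  apply Rmult_le_reg_l with (120*x); lra.
Qed.

Definition l_P7 : list term := T 45 1 1 :: T 15 3 1 :: T (-1) 5 1 :: T 1 7 1 :: T (-45) 2 1 :: nil.
Lemma P7_Zc M : (0 <= Zc l_P7 M)%Z.
Proof.
  destruct (Nat.lt_ge_cases M 4). revert M H; Zsmall l_P7 4%nat.
  unfold l_P7, T. Zc_prep M 1%Z.
  assert (HN : (4 <= N)%Z) by (subst N; lia). clearbody N.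
  set (n := (2*N)%Z) in *. assert (8 <= n)%Z by lia. clearbody n.
  set (F2 := (n * (n-1))%Z). set (F3 := (F2 * (n-2))%Z). set (F5 := (F3 * (n-3) * (n-4))%Z).
  assert (0 <= F2)%Z by (subst F2; nia). assert (3 * F2 <= F3)%Z by (subst F3; nia).
  assert (0 <= F5)%Z by (subst F5; nia). assert (F5 <= F5 * (n-5) * (n-6))%Z by nia.
  replace (1 * (n - 0) * (n - 1) * (n - 2) * (n - 3) * (n - 4) * (n - 5) * (n - 6))%Z with (F5 * (n-5) * (n-6))%Z by (subst F5 F3 F2; ring).
  replace (1 * (n - 0) * (n - 1) * (n - 2) * (n - 3) * (n - 4))%Z with F5 by (subst F5 F3 F2; ring).
  replace (1 * (n - 0) * (n - 1) * (n - 2))%Z with F3 by (subst F3 F2; ring).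
  replace (1 * (n - 0) * (n - 1))%Z with F2 by (subst F2; ring).
  clearbody F2 F3 F5. lia.
Qed.
Lemma P7 x : 0 < x -> x * cosh x <= sinh x * (1 + x^2/3 - x^4/45 + x^6/45).
Proof.
  intro Hx. assert (H := ev_nonneg l_P7 x (co_nonneg _ P7_Zc)).
  replace (ev l_P7 x) with (45 * x * (sinh x * (1 + x^2/3 - x^4/45 + x^6/45) - x * cosh x)) in H by (unfold l_P7; ev_expand).
  assert (0 <= sinh x * (1 + x^2/3 - x^4/45 + x^6/45) - x * cosh x); [|lra].
  apply Rmult_le_reg_l with (45*x); lra.
Qed.



Lemma deriv_incr (f df : R -> R) a b : a < b ->
  (forall c, a <= c <= b -> is_derive f c (df c)) ->
  (forall c, a < c < b -> 0 < df c) -> f a < f b.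
Proof.
  intros Hab Hd Hp.
  destruct (MVT_cor2 f df a b Hab) as [c [Hc1 Hc2]].
  - intros c Hc. apply is_derive_Reals. auto.
  - specialize (Hp c Hc2). nra.
Qed.

Lemma ln_le_sub1 z : 0 < z -> ln z <= z - 1.
Proof. intro. assert (H0 := exp_ineq1_le (ln z)). rewrite exp_ln in H0; lra. Qed.

Lemma exp_neg_lb1 s : 0 < s -> 1 - s < exp (- s).
Proof. intro. assert (H0 := exp_ineq1 (-s) ltac:(lra)). lra. Qed.

Lemma exp_neg_ub2 s : 0 < s -> exp (- s) < 1 - s + s^2/2.
Proof.
  intro Hs. apply (deriv_incr (fun s => (1 - s + s^2/2) - exp (-s)) (fun s => exp (-s) - 1 + s) 0 s) in Hs.
  - rewrite Ropp_0, exp_0 in Hs. lra.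
  - intros c _. auto_derive; auto. field.
  - intros c [Hc _]. assert (H0 := exp_neg_lb1 c Hc). lra.
Qed.

Lemma exp_neg_lb3 s : 0 < s -> 1 - s + s^2/2 - s^3/6 < exp (- s).
Proof.
  intro Hs. apply (deriv_incr (fun s => exp (-s) - (1 - s + s^2/2 - s^3/6)) (fun s => (1 - s + s^2/2) - exp (-s)) 0 s) in Hs.
  - rewrite Ropp_0, exp_0 in Hs. lra.
  - intros c _. auto_derive; auto. field.
  - intros c [Hc _]. assert (H0 := exp_neg_ub2 c Hc). lra.
Qed.

Lemma ln1p_lb t : 0 < t -> t - t^2/2 < ln (1 + t).
Proof.
  intro Ht. apply (deriv_incr (fun t => ln (1 + t) - (t - t^2/2)) (fun t => t^2 / (1 + t)) 0 t) in Ht.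
  - rewrite Rplus_0_r, ln_1 in Ht. lra.
  - intros c Hc. auto_derive. lra. field. lra.
  - intros c [Hc _]. apply Rdiv_lt_0_compat; nra.
Qed.

Lemma ln1p_ub t : 0 < t -> ln (1 + t) < t - t^2/2 + t^3/3.
Proof.
  intro Ht. apply (deriv_incr (fun t => (t - t^2/2 + t^3/3) - ln (1 + t)) (fun t => t^3 / (1 + t)) 0 t) in Ht.
  - rewrite Rplus_0_r, ln_1 in Ht. lra.
  - intros c Hc. auto_derive. lra. field. lra.
  - intros c [Hc _]. apply Rdiv_lt_0_compat; [apply pow_lt|]; lra.
Qed.

Lemma gnum_pos y : y <> 0 -> 0 < y * exp y - exp y + 1.
Proof.
  intro Hy. assert (H0 := exp_ineq1 (-y) ltac:(lra)).
  assert (E : exp y * exp (-y) = 1) by (rewrite <- exp_plus; replace (y + -y) with 0 by ring; apply exp_0).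
  assert (0 < exp y) by apply exp_pos. nra.
Qed.

Lemma g_incr_pos s t : 0 < s -> s < t -> (exp s - 1) / s < (exp t - 1) / t.
Proof.
  intros Hs Hst. apply (deriv_incr (fun y => (exp y - 1) / y) (fun y => (y * exp y - exp y + 1) / y^2) s t Hst).
  - intros c Hc. auto_derive. lra. field. lra.
  - intros c Hc. apply Rdiv_lt_0_compat. apply gnum_pos; lra. nra.
Qed.

Lemma g_incr_neg s t : s < t -> t < 0 -> (exp s - 1) / s < (exp t - 1) / t.
Proof.
  intros Hst Ht. apply (deriv_incr (fun y => (exp y - 1) / y) (fun y => (y * exp y - exp y + 1) / y^2) s t Hst).
  - intros c Hc. auto_derive. lra. field. lra.
  - intros c Hc. apply Rdiv_lt_0_compat. apply gnum_pos; lra. nra.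
Qed.

Lemma exp_convex25 a : a < 0 -> exp (2/5 * a) < 2/5 * exp a + 3/5.
Proof.
  intro Ha. apply (deriv_incr (fun a => - (2/5 * exp a + 3/5 - exp (2/5 * a))) (fun a => 2/5 * (exp (2/5 * a) - exp a)) a 0) in Ha.
  - rewrite Rmult_0_r, exp_0 in Ha. lra.
  - intros c _. auto_derive; auto. field.
  - intros c [Hc Hc2]. assert (exp c < exp (2/5*c)) by (apply exp_increasing; lra). lra.
Qed.

Lemma L2 q w : 0 < q -> 0 < w ->
  q * (1 - exp (- ((q+1) * w))) < (q + 1) * (1 - exp (- (q * (1 - exp (- w))))).
Proof.
  intros Hq Hw.
  apply (deriv_incr (fun w => (q + 1) * (1 - exp (- (q * (1 - exp (- w))))) - q * (1 - exp (- ((q+1) * w))))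
     (fun w => q * (q+1) * exp (-w) * (exp (- (q * (1 - exp (- w)))) - exp (- (q * w)))) 0 w) in Hw.
  - repeat rewrite ?Ropp_0, ?exp_0, ?Rminus_eq_0, ?Rmult_0_r, ?Rmult_0_l in Hw. lra.
  - intros c _. auto_derive; auto.
    replace (exp (- ((q+1) * c))) with (exp (-c) * exp (- (q * c))) by (rewrite <- exp_plus; f_equal; ring).
    replace (1 + - exp (-c)) with (1 - exp (-c)) by ring. field.
  - intros c [Hc _]. assert (0 < exp (-c)) by apply exp_pos.
    assert (exp (- (q * c)) < exp (- (q * (1 - exp (- c))))).
    { apply exp_increasing. assert (1 - c < exp (-c)) by (apply exp_neg_lb1; auto). nra. }
    assert (0 < q * (q+1)) by nra.
    apply Rmult_lt_0_compat; [apply Rmult_lt_0_compat|]; lra.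
Qed.


Definition G x := 6/5 * ln (x * cosh x / sinh x) - 1 + exp (-(12/5) * ln (sinh x / x)).
Definition dG x := 6/5 * (1/x + sinh x / cosh x - cosh x / sinh x)
   - 12/5 * exp (-(12/5) * ln (sinh x / x)) * (cosh x / sinh x - 1/x).

Lemma G_deriv x : 0 < x -> is_derive G x (dG x).
Proof.
  intro Hx. assert (Hs := P1 x Hx).
  assert (Hc : 0 < cosh x) by (unfold cosh; assert (0 < exp x) by apply exp_pos; assert (0 < exp (-x)) by apply exp_pos; lra).
  unfold G. unfold sinh at 1 2, cosh at 1. auto_derive.
  - change ((exp x + - exp (- x)) * / 2) with (sinh x).
    change ((exp x + exp (- x)) * / 2) with (cosh x).
    repeat split; try lra.
    apply Rmult_lt_0_compat; [nra|]. apply Rinv_0_lt_compat; lra.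
    apply Rmult_lt_0_compat; [lra|]. apply Rinv_0_lt_compat; lra.
  - change ((exp x + - exp (- x)) * / 2) with (sinh x).
    change ((exp x + exp (- x)) * / 2) with (cosh x).
    replace ((1 * exp x + - (- (1) * exp (- x))) * / 2) with (cosh x) by (unfold cosh; field).
    replace ((1 * exp x + - (1) * exp (- x)) * / 2) with (sinh x) by (unfold sinh; field).
    change (sinh x * / x) with (sinh x / x).
    unfold dG. set (W := exp (- (12 / 5) * ln (sinh x / x))).
    field. lra.
Qed.

Lemma cosh_sinh_sq x : cosh x ^ 2 - sinh x ^ 2 = 1.
Proof.
  unfold cosh, sinh. assert (E : exp x * exp (-x) = 1) by (rewrite <- exp_plus; replace (x + -x) with 0 by ring; apply exp_0).
  nra.
Qed.

Lemma cosh_pos x : 0 < cosh x.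
Proof. unfold cosh. assert (0 < exp x) by apply exp_pos. assert (0 < exp (-x)) by apply exp_pos. lra. Qed.

Lemma V_lb x : 0 < x -> 5 * (sinh x / x)^3 / (2 + 3 * (sinh x / x)) <= exp (12/5 * ln (sinh x / x)).
Proof.
  intro Hx. assert (Hs := P1 x Hx). set (S := sinh x / x).
  assert (HS : 1 < S) by (unfold S; apply (Rmult_lt_reg_r x); [lra|]; unfold Rdiv; rewrite Rmult_assoc, Rinv_l; lra).
  assert (Hu : 0 < ln S) by (rewrite <- ln_1; apply ln_increasing; lra).
  set (u := ln S) in *.
  assert (E1 : exp (12/5 * u) = exp u ^ 2 * exp (2/5 * u)).
  { replace (exp u ^ 2) with (exp (u + u)) by (rewrite exp_plus; ring).
    rewrite <- exp_plus. f_equal. field. }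
  assert (Eu : exp u = S) by (unfold u; apply exp_ln; lra).
  assert (E2 : exp (2/5 * u) * exp (2/5 * (-u)) = 1).
  { rewrite <- exp_plus. replace (2/5*u + 2/5*(-u)) with 0 by ring. apply exp_0. }
  assert (E3 : exp (-u) = / S) by (rewrite exp_Ropp, Eu; auto).
  assert (C := exp_convex25 (-u) ltac:(lra)). rewrite E3 in C.
  assert (P := exp_pos (2/5 * (-u))). assert (P2 := exp_pos (2/5 * u)).
  rewrite E1, Eu.
  assert (5 * S / (2 + 3 * S) <= exp (2/5 * u)).
  { set (a := exp (2/5 * u)) in *. set (b := exp (2/5 * (-u))) in *.
    assert (Hb : b < 2 / (5 * S) + 3/5) by (replace (2 / (5*S)) with (2/5 * / S) by (field; lra); lra).
    apply Rmult_le_reg_r with (2 + 3 * S). lra.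
    replace (5 * S / (2 + 3 * S) * (2 + 3 * S)) with (5 * S) by (field; lra).
    assert (a * b * (2 + 3*S) = 2 + 3*S) by (rewrite E2; ring).
    assert (b * (5 * S) < 2 + 3 * S).
    { apply Rmult_lt_reg_r with (/ (5*S)). apply Rinv_0_lt_compat; lra.
      replace (b * (5 * S) * / (5 * S)) with b by (field; lra).
      replace ((2 + 3*S) * / (5*S)) with (2 / (5 * S) + 3/5) by (field; lra). lra. }
    nra. }
  replace (5 * S ^ 3 / (2 + 3 * S)) with (S^2 * (5 * S / (2 + 3 * S))) by (field; lra).
  apply Rmult_le_compat_l; [nra|auto].
Qed.

Lemma dG_pos x : 0 < x -> 0 < dG x.
Proof.
  intro Hx. assert (Hs := P1 x Hx). assert (H2 := P2 x Hx). assert (H3 := P3 x Hx).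
  assert (H5 := P5 x Hx). assert (HV := V_lb x Hx). assert (Hc := cosh_pos x).
  assert (Hcs := cosh_sinh_sq x).
  unfold dG.
  set (s := sinh x) in *. set (c := cosh x) in *.
  set (V := exp (12/5 * ln (s / x))) in *.
  assert (EW : exp (- (12/5) * ln (s / x)) = / V).
  { unfold V. rewrite <- exp_Ropp. f_equal. ring. }
  rewrite EW.
  assert (HVp : 0 < V) by apply exp_pos.
  set (A := 1/x - 1/(s*c)). set (B := c/s - 1/x).
  assert (EA : 1/x + s/c - c/s = A).
  { replace (1/x + s/c - c/s) with (1/x + (s^2 - c^2)/(s*c)) by (field; split; lra).
    replace (s^2 - c^2) with (-1) by lra. unfold A. field. split; lra. }
  rewrite EA.
  assert (HA : 0 < A).
  { unfold A. assert (0 < s*c) by nra.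
    assert (1/(s*c) < 1/x); [|lra].
    unfold Rdiv. rewrite !Rmult_1_l. apply Rinv_lt_contravar; nra. }
  assert (HB : 0 < B).
  { unfold B. assert (1/x < c/s); [|lra].
    apply Rmult_lt_reg_r with (x*s). nra.
    replace (1/x*(x*s)) with s by (field; lra). replace (c/s*(x*s)) with (x*c) by (field; lra). lra. }
  set (L := 5 * (s / x)^3 / (2 + 3 * (s / x))) in *.
  assert (HL : 2 * B < L * A).
  { assert (E : L * A - 2 * B = (5 * s ^ 3 * (s * c - x) - 2 * x ^ 2 * c * (x * c - s) * (2 * x + 3 * s))
        / (x^3 * s * c * (2 * x + 3 * s))).
    { unfold L, A, B. field. repeat split; lra. }
    assert (0 < (5 * s ^ 3 * (s * c - x) - 2 * x ^ 2 * c * (x * c - s) * (2 * x + 3 * s))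
        / (x^3 * s * c * (2 * x + 3 * s))).
    { apply Rdiv_lt_0_compat. lra. assert (0 < x^3) by (apply pow_lt; lra).
      assert (0 < 2*x + 3*s) by lra. assert (0 < s * c) by nra. assert (0 < x^3 * (s*c)) by nra. nra. }
    lra. }
  assert (L * A <= V * A) by (apply Rmult_le_compat_r; lra).
  assert (2 * B < V * A) by lra.
  assert (12/5 * /V * B < 6/5 * A); [|lra].
  apply Rmult_lt_reg_l with V. lra.
  replace (V * (12/5 * /V * B)) with (6/5 * (2 * B)) by (field; lra). nra.
Qed.

Definition l_P8 : list term := T 1 2 1 :: T (-2) 0 1 :: T 2 0 0 :: nil.
Lemma P8_Zc M : (0 <= Zc l_P8 M)%Z.
Proof.
  destruct (Nat.lt_ge_cases M 2). revert M H; Zsmall l_P8 2%nat.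
  unfold l_P8, T. Zc_prep M 1%Z. nia.
Qed.
Lemma P8 x : 2 * (cosh x - 1) <= x^2 * cosh x.
Proof.
  assert (H := ev_nonneg l_P8 x (co_nonneg _ P8_Zc)).
  replace (ev l_P8 x) with (x^2 * cosh x - 2 * cosh x + 2) in H by (unfold l_P8; ev_expand). lra.
Qed.

Lemma exp_le_exp a b : a <= b -> exp a <= exp b.
Proof. intro H. destruct (Rle_lt_or_eq_dec a b H). left; apply exp_increasing; auto. subst; lra. Qed.

Lemma cosh_small y : 0 < y <= 1 -> cosh y <= 1 + y^2.
Proof.
  intros Hy. assert (H := P8 y).
  assert (cosh y <= 2).
  { unfold cosh. assert (exp y <= exp 1) by (apply exp_le_exp; lra).
    assert (exp (-y) <= exp 0) by (apply exp_le_exp; lra). rewrite exp_0 in *.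
    assert (H3 := exp_le_3). lra. }
  assert (y^2 <= 1) by nra. assert (0 <= y^2) by nra. nra.
Qed.

Lemma G_incr y x : 0 < y -> y < x -> G y < G x.
Proof.
  intros Hy Hyx. apply (deriv_incr G dG y x Hyx).
  - intros c Hc. apply G_deriv. lra.
  - intros c Hc. apply dG_pos. lra.
Qed.

Lemma G_lb y : 0 < y <= 1 -> - (12/5) * y^2 <= G y.
Proof.
  intros Hy. assert (Hs := P1 y ltac:(lra)). assert (H2 := P2 y ltac:(lra)).
  assert (Hc := cosh_small y Hy). unfold G.
  assert (0 < ln (y * cosh y / sinh y)).
  { rewrite <- ln_1. apply ln_increasing. lra. apply Rmult_lt_reg_r with (sinh y). lra.
    replace (y * cosh y / sinh y * sinh y) with (y * cosh y) by (field; lra). lra. }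
  assert (ln (sinh y / y) <= y^2).
  { assert (sinh y / y <= 1 + y^2).
    { apply Rmult_le_reg_r with y. lra. replace (sinh y / y * y) with (sinh y) by (field; lra). nra. }
    assert (0 < sinh y / y) by (apply Rdiv_lt_0_compat; lra).
    assert (ln (sinh y / y) <= ln (1 + y^2)) by (apply ln_le; lra).
    assert (Hl := ln_le_sub1 (1 + y^2) ltac:(nra)). lra. }
  assert (exp (- (12/5) * y^2) <= exp (- (12/5) * ln (sinh y / y))) by (apply exp_le_exp; lra).
  assert (He := exp_ineq1_le (- (12/5) * y^2)). lra.
Qed.

Lemma G_nonneg x : 0 < x -> 0 <= G x.
Proof.
  intro Hx. destruct (Rle_or_lt 0 (G x)) as [|Hn]; auto. exfalso.
  set (y := Rmin (x/2) (Rmin (1/2) (- G x * 5 / 24))).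
  assert (Hy1 : y <= x/2) by apply Rmin_l.
  assert (Hy2 : y <= 1/2) by (eapply Rle_trans; [apply Rmin_r|apply Rmin_l]).
  assert (Hy3 : y <= - G x * 5 / 24) by (eapply Rle_trans; [apply Rmin_r|apply Rmin_r]).
  assert (Hy0 : 0 < y) by (unfold y; repeat apply Rmin_glb_lt; lra).
  assert (H1 := G_incr y x Hy0 ltac:(lra)). assert (H2 := G_lb y ltac:(lra)).
  assert (y^2 <= y / 2) by nra. nra.
Qed.

Lemma G_pos x : 0 < x -> 0 < G x.
Proof. intro. assert (Hi := G_incr (x/2) x ltac:(lra) ltac:(lra)). assert (Hn := G_nonneg (x/2) ltac:(lra)). lra. Qed.


Definition t0 z := z/6 + z^2/120.
Definition ulo z := t0 z - (t0 z)^2/2.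
Definition r0 z := z/3 - z^2/45 + z^3/45.
Definition Vz z := r0 z - (r0 z)^2/2 + (r0 z)^3/3.

Ltac zpows z n :=
  let rec go k := match k with
    | O => idtac
    | S ?k' => assert (0 <= z ^ (S k')) by (apply pow_le; lra);
               assert (z ^ (S (S k')) <= z ^ (S k')) by (simpl; nra);
               go k' end in go n.

Lemma poly_i z : 0 <= z <= 1 -> z^2/15 - z^3/10 <= 2 * ulo z - Vz z.
Proof.
  intro Hz. unfold ulo, Vz, t0, r0. zpows z 10%nat. ring_simplify. lra.
Qed.

Lemma poly_ii z : 0 <= z <= 1 -> z^2/9 - z^3/15 <= (Vz z)^2.
Proof.
  intro Hz. unfold Vz, r0. zpows z 18%nat. ring_simplify. lra.
Qed.

Lemma poly_iii z : 0 < z <= 1 -> 0 < Vz z <= z/2.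
Proof.
  intro Hz. unfold Vz, r0. zpows z 10%nat. assert (0 < z^2) by nra. split; ring_simplify; lra.
Qed.

Lemma poly_iv z : 0 < z <= 1 -> 0 < ulo z /\ (ulo z)^2 <= z^2/36 + z^3/300.
Proof.
  intro Hz. unfold ulo, t0. zpows z 10%nat. split; ring_simplify; lra.
Qed.

Lemma poly_v z : 0 < z <= 1 -> 0 < t0 z /\ 0 < r0 z.
Proof. intro Hz. unfold t0, r0. zpows z 4%nat. split; lra. Qed.


Lemma core_eq k A B : k < -2 ->
  2/(k+2) * A + k/(k+2) * B - 1 = (k / (k+2)) * (B - (1 + 2/k - 2/k * A)).
Proof. intro. field. lra. Qed.

Lemma core_equiv k A B : k < -2 ->
  (2/(k+2) * A + k/(k+2) * B < 1 <-> B < 1 + 2/k - 2/k * A).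
Proof.
  intro Hk. assert (Hc : 0 < k / (k+2)).
  { replace (k/(k+2)) with ((-k) / (-(k+2))) by (field; lra). apply Rdiv_lt_0_compat; lra. }
  split; intro H.
  - assert (E := core_eq k A B Hk). nra.
  - assert (E := core_eq k A B Hk). nra.
Qed.

Lemma basic_facts x : 0 < x ->
  1 < sinh x / x /\ 0 < tanh x / x /\ tanh x / x = / (x * cosh x / sinh x) /\ 1 < x * cosh x / sinh x.
Proof.
  intro Hx. assert (Hs := P1 x Hx). assert (H2 := P2 x Hx). assert (Hc := cosh_pos x).
  unfold tanh. repeat split.
  - apply Rmult_lt_reg_r with x; [lra|]. replace (sinh x / x * x) with (sinh x) by (field; lra). lra.
  - apply Rdiv_lt_0_compat; [apply Rdiv_lt_0_compat|]; lra.
  - field. repeat split; lra.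
  - apply Rmult_lt_reg_r with (sinh x); [lra|]. replace (x * cosh x / sinh x * sinh x) with (x * cosh x) by (field; lra). lra.
Qed.

Lemma suff_neg k p x : k < -2 -> p < 0 -> 0 < x ->
  2 / (k + 2) * Rpower (sinh x / x) (k * p) + k / (k + 2) * Rpower (tanh x / x) p < 1.
Proof.
  intros Hk Hp Hx. apply core_equiv; auto. unfold Rpower.
  destruct (basic_facts x Hx) as [HS [HT [ET HV]]].
  assert (Hs := P1 x Hx). assert (Hc := cosh_pos x). assert (H4 := P4 x Hx).
  set (u := ln (sinh x / x)). assert (Hu : 0 < u) by (unfold u; rewrite <- ln_1; apply ln_increasing; lra).
  assert (Hlt : - 2 * u <= ln (tanh x / x)).
  { assert (H1 : 1 <= tanh x / x * (sinh x / x)^2).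
    { unfold tanh. replace (sinh x / cosh x / x * (sinh x / x)^2) with (sinh x ^ 3 / (x^3 * cosh x)) by (field; repeat split; lra).
      assert (0 < x^3 * cosh x) by (apply Rmult_lt_0_compat; [apply pow_lt|]; lra).
      apply Rmult_le_reg_r with (x^3 * cosh x); auto. replace (sinh x ^ 3 / (x^3 * cosh x) * (x^3 * cosh x)) with (sinh x ^ 3) by (field; lra). lra. }
    assert (H : 0 <= ln (tanh x / x * (sinh x / x)^2)) by (rewrite <- ln_1; apply ln_le; lra).
    rewrite ln_mult, ln_pow in H by (try apply pow_lt; lra). unfold u. simpl INR in H. lra. }
  set (lam := -2/k). assert (Hl : 0 < lam < 1) by (unfold lam; split; [replace (-2/k) with (2/(-k)) by (field; lra); apply Rdiv_lt_0_compat; lra|];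
     apply Rmult_lt_reg_r with (-k); [lra|]; replace (-2/k * -k) with 2 by (field; lra); lra).
  set (sg := -2 * p * u). assert (Hsg : 0 < sg) by (unfold sg; nra).
  assert (E1 : k * p * u = sg / lam) by (unfold sg, lam; field; lra).
  assert (E2 : 2 / k = - lam) by (unfold lam; field; lra).
  rewrite E1, E2.
  assert (Hle : exp (p * ln (tanh x / x)) <= exp sg) by (apply exp_le_exp; unfold sg; nra).
  assert (Hlt2 : sg < sg / lam).
  { apply Rmult_lt_reg_r with lam; [lra|]. replace (sg / lam * lam) with sg by (field; lra). nra. }
  assert (G := g_incr_pos sg (sg / lam) Hsg Hlt2).
  replace ((exp (sg / lam) - 1) / (sg / lam)) with (lam * (exp (sg / lam) - 1) / sg) in G by (field; lra).
  assert (exp sg - 1 < lam * (exp (sg / lam) - 1)).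
  { apply Rmult_lt_reg_r with (/ sg). apply Rinv_0_lt_compat; lra.
    replace ((exp sg - 1) * / sg) with ((exp sg - 1) / sg) by (field; lra).
    replace (lam * (exp (sg / lam) - 1) * / sg) with (lam * (exp (sg / lam) - 1) / sg) by (field; lra). lra. }
  lra.
Qed.

Lemma suff_pos k p x : k < -2 -> p >= - (12 / (5 * (k + 2))) -> 0 < x ->
  2 / (k + 2) * Rpower (sinh x / x) (k * p) + k / (k + 2) * Rpower (tanh x / x) p < 1.
Proof.
  intros Hk Hp0 Hx.
  assert (Hth : 0 < - (12 / (5 * (k + 2)))).
  { replace (- (12 / (5 * (k + 2)))) with (12 / (5 * (-(k+2)))) by (field; lra). apply Rdiv_lt_0_compat; lra. }
  assert (Hp : 0 < p) by lra.
  apply core_equiv; auto. unfold Rpower.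
  destruct (basic_facts x Hx) as [HS [HT [ET HV]]].
  assert (Hs := P1 x Hx). assert (Hc := cosh_pos x). assert (HG := G_pos x Hx).
  set (u := ln (sinh x / x)). assert (Hu : 0 < u) by (unfold u; rewrite <- ln_1; apply ln_increasing; lra).
  set (v := ln (x * cosh x / sinh x)).
  assert (Elt : ln (tanh x / x) = - v) by (rewrite ET; unfold v; apply ln_Rinv; lra).
  rewrite Elt. unfold G in HG. fold v u in HG.
  set (q := 5 * p / 6). set (w := 12 / 5 * u).
  assert (Hq : 0 < q) by (unfold q; lra). assert (Hw : 0 < w) by (unfold w; lra).
  replace (exp (- (12/5) * u)) with (exp (- w)) in HG by (f_equal; unfold w; ring).
  assert (HB : exp (p * - v) < exp (- (q * (1 - exp (- w))))).
  { apply exp_increasing. unfold q. nra. }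
  assert (HL2 := L2 q w Hq Hw).
  set (lam := -2/k). set (lam0 := q / (q + 1)).
  assert (E2 : 2 / k = - lam) by (unfold lam; field; lra).
  set (K := 2 * p * u). assert (HK : 0 < K) by (unfold K; nra).
  assert (Hlam : 0 < lam) by (unfold lam; replace (-2/k) with (2/(-k)) by (field; lra); apply Rdiv_lt_0_compat; lra).
  assert (Hlam0 : 0 < lam0) by (unfold lam0; apply Rdiv_lt_0_compat; lra).
  assert (Hll : lam <= lam0).
  { unfold lam, lam0, q. 
    apply Rmult_le_reg_r with ((-k) * (5 * p + 6)). nra.
    replace (-2 / k * (-k * (5 * p + 6))) with (2 * (5*p+6)) by (field; lra).
    replace (5 * p / 6 / (5 * p / 6 + 1) * (- k * (5 * p + 6))) with (5 * p * (-k)) by (field; lra).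
    assert (p * (-5 * (k+2)) >= 12).
    { apply Rle_ge. apply Rmult_le_reg_r with (/ (-5 * (k+2))). apply Rinv_0_lt_compat; lra.
      replace (p * (-5 * (k + 2)) * / (-5 * (k + 2))) with p by (field; lra).
      replace (12 * / (-5 * (k + 2))) with (- (12 / (5 * (k + 2)))) by (field; lra). lra. }
    lra. }
  assert (E1 : k * p * u = - K / lam) by (unfold K, lam; field; lra).
  assert (E3 : (q + 1) * w = K / lam0) by (unfold K, lam0, q, w; field; lra).
  rewrite E2, E1. rewrite E3 in HL2.
  assert (H1 : exp (- (q * (1 - exp (- w)))) < 1 - lam0 * (1 - exp (- (K / lam0)))).
  { apply Rmult_lt_reg_l with (q + 1). lra.
    replace ((q + 1) * (1 - lam0 * (1 - exp (- (K / lam0))))) with ((q+1) - q * (1 - exp (- (K / lam0)))) by (unfold lam0; field; lra).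
    lra. }
  assert (H2 : lam * (1 - exp (- K / lam)) <= lam0 * (1 - exp (- (K / lam0)))).
  { destruct (Rle_lt_or_eq_dec _ _ Hll) as [Hlt|Heq].
    - assert (Ha : - K / lam < - (K / lam0)).
      { apply Ropp_lt_cancel. replace (- (- K / lam)) with (K / lam) by (field; lra). rewrite Ropp_involutive.
        apply Rmult_lt_reg_r with (lam * lam0). nra.
        replace (K / lam0 * (lam * lam0)) with (K * lam) by (field; lra).
        replace (K / lam * (lam * lam0)) with (K * lam0) by (field; lra). nra. }
      assert (Hb : - (K / lam0) < 0).
      { assert (0 < K / lam0) by (apply Rdiv_lt_0_compat; lra). lra. }
      assert (G := g_incr_neg _ _ Ha Hb).
      replace ((exp (- K / lam) - 1) / (- K / lam)) with (lam * (1 - exp (- K / lam)) / K) in G by (field; lra).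
      replace ((exp (- (K / lam0)) - 1) / (- (K / lam0))) with (lam0 * (1 - exp (- (K / lam0))) / K) in G by (field; lra).
      left. apply Rmult_lt_reg_r with (/ K) ; [apply Rinv_0_lt_compat; lra|]. unfold Rdiv in G. lra.
    - rewrite Heq. replace (- K / lam0) with (- (K / lam0)) by (field; lra). lra. }
  lra.
Qed.

Lemma Dz_nonneg k p z : k < -2 -> 0 < p -> 0 < z <= 1 ->
  z * (1/10 + p/30 + p^2/48 - k*p/300) <= 1/15 + p*(k+2)/36 ->
  0 <= 2 * ulo z - Vz z + k * p * (ulo z)^2 + p * (Vz z)^2 / 2 - p^2 * (Vz z)^3 / 6.
Proof.
  intros Hk Hp Hz Hzc.
  assert (H1 := poly_i z ltac:(lra)). assert (H2 := poly_ii z ltac:(lra)).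
  destruct (poly_iii z Hz) as [H3a H3b]. destruct (poly_iv z Hz) as [H4a H4b].
  set (V := Vz z) in *. set (U := ulo z) in *.
  assert (HV3 : V^3 <= z^3/8).
  { replace (z^3/8) with ((z/2)^3) by field. apply pow_incr. lra. }
  assert (A2 : p * (z^2/9 - z^3/15) / 2 <= p * V^2 / 2).
  { apply Rmult_le_compat_r; [lra|]. apply Rmult_le_compat_l; lra. }
  assert (A3 : p^2 * V^3 / 6 <= p^2 * (z^3/8) / 6).
  { apply Rmult_le_compat_r; [lra|]. apply Rmult_le_compat_l; [nra|lra]. }
  assert (A4 : k * p * (z^2/36 + z^3/300) <= k * p * U^2).
  { apply Rmult_le_compat_neg_l; [nra|lra]. }
  assert (Hz2 : 0 < z^2) by nra.
  assert (A5 : 0 <= z^2 * ((1/15 + p*(k+2)/36) - z * (1/10 + p/30 + p^2/48 - k*p/300))).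
  { apply Rmult_le_pos; lra. }
  nra.
Qed.

Lemma necess k p : k < -2 -> 0 < p -> p < - (12 / (5 * (k + 2))) ->
  exists x, 0 < x /\
  1 <= 2 / (k + 2) * Rpower (sinh x / x) (k * p) + k / (k + 2) * Rpower (tanh x / x) p.
Proof.
  intros Hk Hp Hpt.
  set (c2 := 1/15 + p*(k+2)/36). set (C3 := 1/10 + p/30 + p^2/48 - k*p/300).
  assert (Hc2 : 0 < c2).
  { unfold c2. assert (p * (-(k+2)) < 12/5); [|nra].
    apply Rmult_lt_reg_r with (/ (-(k+2))). apply Rinv_0_lt_compat; lra.
    replace (p * - (k + 2) * / - (k + 2)) with p by (field; lra).
    replace (12/5 * / - (k+2)) with (- (12 / (5 * (k + 2)))) by (field; lra). lra. }
  assert (HC3 : 0 < C3) by (unfold C3; nra).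
  set (z := Rmin 1 (c2 / C3)).
  assert (Hz1 : z <= 1) by apply Rmin_l. assert (Hz2 : z <= c2 / C3) by apply Rmin_r.
  assert (Hz0 : 0 < z) by (unfold z; apply Rmin_glb_lt; [lra|apply Rdiv_lt_0_compat; lra]).
  assert (Hzc : z * C3 <= c2).
  { apply Rmult_le_reg_r with (/ C3). apply Rinv_0_lt_compat; lra.
    replace (z * C3 * / C3) with z by (field; lra). exact Hz2. }
  assert (HD := Dz_nonneg k p z Hk Hp (conj Hz0 Hz1) ltac:(unfold C3, c2 in *; lra)).
  set (x := sqrt z). exists x.
  assert (Hx : 0 < x) by (apply sqrt_lt_R0; lra).
  assert (Ex2 : x^2 = z) by (unfold x; simpl; rewrite Rmult_1_r; apply sqrt_sqrt; lra).
  split; auto.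
  assert (Hkk : 0 < k / (k+2)).
  { replace (k/(k+2)) with ((-k) / (-(k+2))) by (field; lra). apply Rdiv_lt_0_compat; lra. }
  assert (E := core_eq k (Rpower (sinh x / x) (k * p)) (Rpower (tanh x / x) p) Hk).
  assert (0 <= Rpower (tanh x / x) p - (1 + 2/k - 2/k * Rpower (sinh x / x) (k * p))); [|nra].
  unfold Rpower.
  destruct (basic_facts x Hx) as [HS [HT [ET HV]]].
  assert (Hs := P1 x Hx). assert (Hc := cosh_pos x).
  assert (H6 := P6 x Hx). assert (H7 := P7 x Hx).
  destruct (poly_v z (conj Hz0 Hz1)) as [Ht0 Hr0].
  destruct (poly_iii z (conj Hz0 Hz1)) as [HV0 _]. destruct (poly_iv z (conj Hz0 Hz1)) as [Hu0 _].
  set (u := ln (sinh x / x)). set (v := ln (x * cosh x / sinh x)).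
  assert (Elt : ln (tanh x / x) = - v) by (rewrite ET; unfold v; apply ln_Rinv; lra).
  rewrite Elt.
  assert (Hu : ulo z <= u).
  { assert (1 + t0 z <= sinh x / x).
    { apply Rmult_le_reg_r with x; [lra|]. replace (sinh x / x * x) with (sinh x) by (field; lra).
      replace ((1 + t0 z) * x) with (x + x^3/6 + x^5/120); [lra|].
      unfold t0. rewrite <- Ex2. field. }
    assert (ln (1 + t0 z) <= u) by (apply ln_le; lra).
    assert (L := ln1p_lb (t0 z) Ht0). unfold ulo. lra. }
  assert (Hv : v <= Vz z).
  { assert (x * cosh x / sinh x <= 1 + r0 z).
    { apply Rmult_le_reg_r with (sinh x); [lra|]. replace (x * cosh x / sinh x * sinh x) with (x * cosh x) by (field; lra).
      replace ((1 + r0 z) * sinh x) with (sinh x * (1 + x ^ 2 / 3 - x ^ 4 / 45 + x ^ 6 / 45)); [lra|].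
      unfold r0. rewrite <- Ex2. field. }
    assert (v <= ln (1 + r0 z)) by (apply ln_le; lra).
    assert (L := ln1p_ub (r0 z) Hr0). unfold Vz. lra. }
  set (V := Vz z) in *. set (U := ulo z) in *.
  assert (HB : 1 - p*V + (p*V)^2/2 - (p*V)^3/6 <= exp (p * - v)).
  { assert (L := exp_neg_lb3 (p * V) ltac:(nra)).
    assert (exp (- (p*V)) <= exp (p * - v)) by (apply exp_le_exp; nra). lra. }
  assert (HA : exp (k * p * u) <= 1 - (- (k*p*U)) + (- (k*p*U))^2/2).
  { assert (Hkp : 0 < - k * p) by nra.
    assert (L := exp_neg_ub2 (- (k * p * U)) ltac:(nra)).
    rewrite Ropp_involutive in L.
    assert (exp (k * p * u) <= exp (k * p * U)) by (apply exp_le_exp; nra). lra. }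
  assert (Hk2 : 0 < - 2 / k) by (replace (-2/k) with (2/(-k)) by (field; lra); apply Rdiv_lt_0_compat; lra).
  assert (HA2 : - 2 / k * exp (k * p * u) <= -2/k * (1 - (- (k*p*U)) + (- (k*p*U))^2/2)).
  { apply Rmult_le_compat_l; lra. }
  assert (E4 : -2/k * (1 - (- (k*p*U)) + (- (k*p*U))^2/2) = -2/k - 2*p*U - k*p^2*U^2) by (field; lra).
  assert (0 <= p * (2 * U - V + k * p * U^2 + p * V^2 / 2 - p^2 * V^3 / 6)) by (apply Rmult_le_pos; lra).
  replace (1 + 2/k - 2/k * exp (k * p * u)) with (1 + 2/k + (-2/k) * exp (k * p * u)) by (field; lra).
  nra.
Qed.

Theorem theorem3p4 (k p : R) (hk : k < -2) (hp : p <> 0) :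
  (forall x : R, 0 < x ->
     2 / (k + 2) * Rpower (sinh x / x) (k * p)
     + k / (k + 2) * Rpower (tanh x / x) p < 1)
  <-> (p < 0 \/ p >= - (12 / (5 * (k + 2)))).
Proof.
  split.
  - intro H. destruct (Rlt_or_le p 0) as [Hn|Hn]; [left; exact Hn|right].
    assert (Hp : 0 < p) by (destruct Hn as [Hn|Hn]; [auto|subst; contradiction]).
    destruct (Rge_or_lt p (- (12 / (5 * (k + 2))))) as [Hg|Hl]; auto.
    destruct (necess k p hk Hp Hl) as [x [Hx H1]]. specialize (H x Hx). lra.
  - intros [Hn|Hg] x Hx.
    + apply suff_neg; auto.
    + apply suff_pos; auto.
Qed.
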